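(* Let $n\in\mathbb{N}$, $n\geq 2$, let $l\in(0,\frac{2}{n})$ and let $\alpha$ satisfy $\frac{2}{n}\leq\alpha<1+\frac{1}{n}-\frac{l}{2}$. Then there exist $\theta$ with $1<\theta<\frac{n}{n-2}$ and $\mu>\frac{n}{2}$ such that $$\frac{l(2\mu-1)}{4\mu-n}<\frac{n(\theta+1-2\alpha\theta)+2\theta}{2n\theta+n^2-n^2\theta}.$$
   Context: For $n=2$ the condition $1<\theta<\frac{n}{n-2}$ is understood as $\theta>1$. *)

(* Defs.v *)
From Stdlib Require Import Reals.
Open Scope R_scope.

(* The condition 1 < theta < n/(n-2), where for n = 2 the upper bound is
   void (convention from the paper). *)
Definition theta_admissible (n : nat) (theta : R) : Prop :=
  1 < theta /\ ((n = 2%nat) \/ theta < INR n / (INR n - 2)).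

(* Main.v *)
Require Import Defs.
From Stdlib Require Import Reals Lra Psatz.
Open Scope R_scope.

Lemma div_lt_aux (a b c : R) : 0 < b -> a < c * b -> a / b < c.
Proof.
  intros Hb H. apply (Rmult_lt_reg_r b); auto.
  replace (a / b * b) with a by (field; lra). lra.
Qed.

Lemma lt_div_aux (a b c : R) : 0 < b -> c * b < a -> c < a / b.
Proof.
  intros Hb H. apply (Rmult_lt_reg_r b); auto.
  replace (a / b * b) with a by (field; lra). lra.
Qed.

Theorem lemma4p4 (n : nat) (l alpha : R) :
  (2 <= n)%nat ->
  0 < l -> l < 2 / INR n ->
  2 / INR n <= alpha -> alpha < 1 + 1 / INR n - l / 2 ->
  exists theta mu : R,
    theta_admissible n theta /\ INR n / 2 < mu /\
    l * (2 * mu - 1) / (4 * mu - INR n) <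
    (INR n * (theta + 1 - 2 * alpha * theta) + 2 * theta) /
    (2 * INR n * theta + INR n ^ 2 - INR n ^ 2 * theta).
Proof.
  intros Hn Hl Hl2 Ha1 Ha2.
  assert (HN : 2 <= INR n) by (replace 2 with (INR 2) by (simpl; lra); apply le_INR; lia).
  set (N := INR n) in *.
  set (d := 1 - alpha + 1 / N - l / 2).
  assert (Hd : 0 < d) by (unfold d; lra).
  assert (HiN : 1 / N * N = 1) by (field; lra).
  assert (HiN0 : 0 < 1 / N) by (apply Rdiv_lt_0_compat; lra).
  assert (Hdle : d <= 1 - 1/N).
  { unfold d. assert (2 / N = 2 * (1/N)) by (field; lra). lra. }
  set (eps := d / N).
  assert (Heps : eps * N = d) by (unfold eps; field; lra).
  assert (Heps0 : 0 < eps) by (unfold eps; apply Rdiv_lt_0_compat; lra).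
  set (mu := N + l * N / d).
  assert (Hmu : d * mu = d * N + l * N) by (unfold mu; field; lra).
  assert (Hmu0 : 0 <= l * N / d) by (apply Rlt_le, Rdiv_lt_0_compat; nra).
  exists (1 + eps), mu. split; [|split].
  - unfold theta_admissible. fold N. split; [lra|].
    destruct (Nat.eq_dec n 2) as [E|E]; [left; exact E| right].
    assert (HN3 : 3 <= N) by (unfold N; replace 3 with (INR 3) by (simpl; lra); apply le_INR; lia).
    apply lt_div_aux.
    + lra.
    + nra.
  - unfold mu. lra.
  - apply Rlt_trans with (l / 2 + d / 2).
    + apply div_lt_aux.
      * unfold mu; lra.
      * nra.
    + apply lt_div_aux.
      * assert (eps * (N - 2) < 2) by nra. nra.
      * assert (HA : 2 * N + 2 - 2 * alpha * N = N * (l + 2 * d)).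
        { unfold d. field; lra. }
        assert (Hk : (l + d) / 2 * (2 - (N - 2) * eps) < (l + 2 * d) + eps * (l + 2 * d) - eps).
        { assert (eps <= d / 2) by nra. nra. }
        replace (2 * N * (1 + eps) + N ^ 2 - N ^ 2 * (1 + eps)) with (N * (2 - (N - 2) * eps)) by ring.
        replace (N * (1 + eps + 1 - 2 * alpha * (1 + eps)) + 2 * (1 + eps))
          with (N * ((l + 2 * d) + eps * (l + 2 * d) - eps)) by nra.
        replace ((l / 2 + d / 2) * (N * (2 - (N - 2) * eps))) with (N * ((l + d) / 2 * (2 - (N - 2) * eps))) by field.
        apply Rmult_lt_compat_l; lra.
Qed.
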